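(* Let $N$ be a simply connected $2$-step nilpotent Lie group with Lie algebra $\mathfrak n$ and a left-invariant Lorentzian metric $\langle\cdot,\cdot\rangle$ of $pH$-type whose center $\mathfrak Z$ is positive definite, and let $\mathfrak E=\mathfrak Z^{\perp}$ (which then contains the timelike direction). Then $\dim\mathfrak Z+1\le\dim\mathfrak E$.
   Context: For $y\in\mathfrak n$ let $J_y$ be defined by $\langle J_y x,w\rangle=\langle y,[x,w]\rangle$ for all $x,w$. Here $\mathfrak n=\mathfrak Z\oplus\mathfrak E$ orthogonally; choose orthonormal bases $\{z_\alpha\}$ of $\mathfrak Z$, $\{e_a\}$ of $\mathfrak E$, $\varepsilon_\alpha=\langle z_\alpha,z_\alpha\rangle$, $\bar\varepsilon_a=\langle e_a,e_a\rangle$. The involution $\iota$ is given by $\iota z_\alpha=\varepsilon_\alpha z_\alpha$, $\iota e_a=\bar\varepsilon_a e_a$, and $j(y)=\iota\circ J_{\iota y}$. The metric is of $pH$-type if $j(z)^2=-\langle z,\iota z\rangle I$ (on $\mathfrak E$) for all $z$ in the center. *)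

(* Defs.v *)
From HB Require Import structures.
From mathcomp Require Import all_boot all_order all_algebra.
From mathcomp Require Import reals.
Set Implicit Arguments. Unset Strict Implicit. Unset Printing Implicit Defensive.
Import Order.TTheory GRing.Theory Num.Theory.
Local Open Scope ring_scope.

Definition bform (R : realType) (n : nat) (G : 'M[R]_n) (u v : 'rV[R]_n) : R :=
  (u *m G *m v^T) 0 0.

(* Lie algebra axioms for a bracket on 'rV_n:
   bilinear (left-linear + alternating), alternating, Jacobi. *)
Definition lie_bracket (R : realType) (n : nat)
  (br : 'rV[R]_n -> 'rV[R]_n -> 'rV[R]_n) : Prop :=
  [/\ (forall (a : R) x y w, br (a *: x + y) w = a *: br x w + br y w),
      (forall x, br x x = 0) &
      (forall x y w, br x (br y w) + br y (br w x) + br w (br x y) = 0)].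

Definition two_step_nilpotent (R : realType) (n : nat)
  (br : 'rV[R]_n -> 'rV[R]_n -> 'rV[R]_n) : Prop :=
  (forall x y w, br (br x y) w = 0) /\ (exists x y, br x y != 0).

Definition basis_mx (R : realType) (n : nat) (b : 'I_n -> 'rV[R]_n) : 'M[R]_n :=
  \matrix_(i < n) b i.

(* b is an onb basis for <.,.>: <b i, b j> = 0 for i <> j and
   <b i, b i> = +1 or -1. (Such a family is automatically a basis.) *)
Definition onb (R : realType) (n : nat) (G : 'M[R]_n)
  (b : 'I_n -> 'rV[R]_n) : Prop :=
  (forall i j, i != j -> bform G (b i) (b j) = 0) /\
  (forall i, bform G (b i) (b i) = 1 \/ bform G (b i) (b i) = -1).

(* The involution iota: iota (b i) = <b i, b i> b i, extended linearly.
   With row vectors, iota v = v *m iota_mx G b. *)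
Definition iota_mx (R : realType) (n : nat) (G : 'M[R]_n)
  (b : 'I_n -> 'rV[R]_n) : 'M[R]_n :=
  invmx (basis_mx b) *m diag_mx (\row_i bform G (b i) (b i)) *m basis_mx b.

(* Main.v *)
Require Import Defs.
From HB Require Import structures.
From mathcomp Require Import all_boot all_order all_algebra.
From mathcomp Require Import reals.
From mathcomp Require Import ring lra.
Import Order.TTheory GRing.Theory Num.Theory.
Local Open Scope ring_scope.

Lemma bformDl (R : realType) n (G : 'M[R]_n) a u v w :
  bform G (a *: u + v) w = a * bform G u w + bform G v w.
Proof. by rewrite /bform !mulmxDl -!scalemxAl !mxE. Qed.

Lemma bformDr (R : realType) n (G : 'M[R]_n) a u v w :
  bform G w (a *: u + v) = a * bform G w u + bform G w v.
Proof. by rewrite /bform linearD linearZ /= mulmxDr -scalemxAr !mxE. Qed.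

Lemma bform_sym (R : realType) n (G : 'M[R]_n) u v :
  G^T = G -> bform G u v = bform G v u.
Proof.
move=> sG; rewrite /bform; transitivity ((u *m G *m v^T)^T 0 0); first by rewrite [RHS]mxE.
by rewrite !trmx_mul trmxK sG mulmxA.
Qed.

Lemma bform_nondeg (R : realType) n (G : 'M[R]_n) u :
  G \in unitmx -> (forall w, bform G u w = 0) -> u = 0.
Proof.
move=> uG h; have := h (u *m G); rewrite /bform mxE => /eqP.
rewrite psumr_eq0; last by move=> j _; rewrite !mxE -expr2 sqr_ge0.
move/allP => H.
have uG0 : u *m G = 0.
  apply/rowP => j; rewrite mxE; have := H j (mem_index_enum _).
  by rewrite !mxE mulf_eq0 orbb => /eqP.
by rewrite -(mulmxK uG u) uG0 mul0mx.
Qed.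

Arguments bform_nondeg {R n G u}.

Lemma gram (R : realType) n (G : 'M[R]_n) b i j :
  (basis_mx b *m G *m (basis_mx b)^T) i j = bform G (b i) (b j).
Proof.
rewrite /bform -[b i](rowK b) -[b j](rowK b) !rowE trmx_mul trmx_delta.
have -> : (basis_mx b *m G *m (basis_mx b)^T) i j =
  (col j (row i (basis_mx b *m G *m (basis_mx b)^T))) 0 0 by rewrite !mxE.
by rewrite colE rowE !mulmxA.
Qed.

Lemma bformBl (R : realType) n (G : 'M[R]_n) u v w :
  bform G (u - v) w = bform G u w - bform G v w.
Proof. by rewrite /bform !mulmxBl !mxE. Qed.

Lemma bformBr (R : realType) n (G : 'M[R]_n) u v w :
  bform G w (u - v) = bform G w u - bform G w v.
Proof. by rewrite /bform linearB /= mulmxBr !mxE. Qed.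

Lemma bform0r (R : realType) n (G : 'M[R]_n) w : bform G w 0 = 0.
Proof. by rewrite /bform trmx0 mulmx0 mxE. Qed.
Lemma bform0l (R : realType) n (G : 'M[R]_n) w : bform G 0 w = 0.
Proof. by rewrite /bform !mul0mx mxE. Qed.

Lemma bformAr (R : realType) n (G : 'M[R]_n) u v w :
  bform G w (u + v) = bform G w u + bform G w v.
Proof. by rewrite /bform linearD /= mulmxDr mxE. Qed.
Lemma bformAl (R : realType) n (G : 'M[R]_n) u v w :
  bform G (u + v) w = bform G u w + bform G v w.
Proof. by rewrite /bform !mulmxDl mxE. Qed.

Theorem mainTheorem2 (R : realType) (n : nat)
  (G : 'M[R]_n) (br : 'rV[R]_n -> 'rV[R]_n -> 'rV[R]_n)
  (Zs Es : 'M[R]_n) (b : 'I_n -> 'rV[R]_n)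
  (J : 'rV[R]_n -> 'rV[R]_n -> 'rV[R]_n) :
  G^T = G ->
  onb G b ->
  (exists t : 'I_n, forall i, (bform G (b i) (b i) == -1) = (i == t)) ->
  lie_bracket br -> two_step_nilpotent br ->
  (forall v, (v <= Zs)%MS <-> (forall w, br v w = 0)) ->
  (forall v, (v <= Es)%MS <-> (forall z, (z <= Zs)%MS -> bform G v z = 0)) ->
  (forall z, (z <= Zs)%MS -> z != 0 -> 0 < bform G z z) ->
  (forall i, (b i <= Zs)%MS \/ (b i <= Es)%MS) ->
  (forall y x w, bform G (J y x) w = bform G y (br x w)) ->
  (let iota v := v *m iota_mx G b in
   forall z, (z <= Zs)%MS -> forall x, (x <= Es)%MS ->
     iota (J (iota z) (iota (J (iota z) x))) = - bform G z (iota z) *: x) ->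
  (\rank Zs + 1 <= \rank Es)%N.
Proof.
move=> sG [ob1 ob2] _ [brl bra brj] [_ [x0 [y0 bxy0]]] hZ hE hpos hb hJ hpH.
rewrite /= in hpH.
set B := basis_mx b in hpH.
set d := \row_i bform G (b i) (b i).
have hd : forall i, d 0 i * d 0 i = 1.
  by move=> i; rewrite mxE; case: (ob2 i) => ->; rewrite ?mulrNN mulr1.
have BGB : B *m G *m B^T = diag_mx d.
  apply/matrixP => i j; rewrite gram !mxE; case: eqP => [->|/eqP ij].
    by rewrite mulr1n.
  by rewrite mulr0n ob1.
have detD : \det (diag_mx d) != 0.
  rewrite det_diag; apply/prodf_neq0 => i _.
  by apply/eqP => h; have := hd i; rewrite h mul0r => /eqP; rewrite eq_sym oner_eq0.
have [uB uG] : B \in unitmx /\ G \in unitmx.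
  move: detD; rewrite -BGB !det_mulmx det_tr !unitmxE !unitfE.
  by rewrite !mulf_eq0 !negb_or => /andP [/andP [-> ->] _].
have DD : diag_mx d *m diag_mx d = 1%:M.
  rewrite mulmx_diag; apply/matrixP => i j; rewrite !mxE -(hd i) !mxE.
  by case: (i == j).
have uBt : B^T \in unitmx by rewrite unitmx_tr.
have Ginv : G = invmx B *m diag_mx d *m invmx B^T.
  by rewrite -BGB !mulmxA mulVmx // mul1mx mulmxK.
set M := iota_mx G b in hpH.
have Mdef : M = invmx B *m diag_mx d *m B by [].
have Miso : M *m G *m M^T = G.
  rewrite Mdef !trmx_mul tr_diag_mx trmx_inv !mulmxA.
  have -> : invmx B *m diag_mx d *m B *m G *m B^T =
     invmx B *m diag_mx d *m (B *m G *m B^T) by rewrite !mulmxA.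
  by rewrite BGB -(mulmxA (invmx B)) DD mulmx1 -Ginv.
have bformB : forall (e : 'rV[R]_n) i, bform G (e *m B) (b i) = e 0 i * d 0 i.
  move=> e i; rewrite /bform -[b i](rowK b) rowE trmx_mul trmx_delta.
  rewrite -/B !mulmxA -(mulmxA e) -(mulmxA e) BGB mul_mx_diag -colE !mxE.
  by [].
have bi0 : forall i, b i != 0.
  move=> i; apply/eqP => h; case: (ob2 i); rewrite h bform0l => /eqP.
    by rewrite eq_sym oner_eq0.
  by rewrite eq_sym oppr_eq0 oner_eq0.
have Mid : forall z : 'rV[R]_n, (z <= Zs)%MS -> z *m M = z.
  move=> z zZ; set e := z *m invmx B.
  have ze : z = e *m B by rewrite /e mulmxKV.
  have eD : e *m diag_mx d = e.
    apply/rowP => i; rewrite mul_mx_diag mxE.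
    case: (hb i) => hbi.
      have : 0 < d 0 i by rewrite mxE; apply: hpos.
      rewrite [d 0 i]mxE; case: (ob2 i) => ->; first by rewrite mulr1.
      by move=> h; move: (lt_trans h (@ltrN10 R)); rewrite ltxx.
    have h0 : e 0 i * d 0 i = 0.
      by rewrite -bformB -ze bform_sym //; exact: (proj1 (hE (b i)) hbi z zZ).
    by rewrite h0 -[e 0 i]mulr1 -(hd i) mulrA h0 mul0r.
  by rewrite Mdef ze !mulmxA mulmxK // eD.
have brD : forall x w1 w2, br x (w1 + w2) = br x w1 + br x w2.
  move=> x w1 w2; apply/eqP; rewrite -subr_eq0; apply/eqP.
  apply: (bform_nondeg uG) => y; rewrite bform_sym // bformBr bformAr -!hJ.
  by rewrite bformAr subrr.
have br0l : forall w, br 0 w = 0.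
  move=> w; have := brl 1 0 0 w; rewrite scale1r addr0 scale1r.
  by move/(congr1 (fun v => v - br 0 w)); rewrite subrr addrK.
have anti : forall x w, br x w = - br w x.
  move=> x w; have := bra (x + w); rewrite -{1}[x]scale1r brl scale1r !brD !bra.
  by rewrite add0r addr0 => /eqP; rewrite addr_eq0 => /eqP.
have Jlin : forall a y1 y2 x, J (a *: y1 + y2) x = a *: J y1 x + J y2 x.
  move=> a y1 y2 x; apply/eqP; rewrite -subr_eq0; apply/eqP.
  apply: (bform_nondeg uG) => w.
  by rewrite bformBl bformDl !hJ bformDl subrr.
have J0 : forall y, J y 0 = 0.
  move=> y; apply: (bform_nondeg uG) => w.
  by rewrite hJ br0l bform0r.
have JE : forall y x, (J y x <= Es)%MS.
  move=> y x; apply/hE => z zZ.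
  by rewrite hJ anti (proj1 (hZ z) zZ) oppr0 bform0r.
have ME : forall v : 'rV[R]_n, (v <= Es)%MS -> (v *m M <= Es)%MS.
  move=> v vE; apply/hE => z zZ; rewrite -(Mid z zZ).
  have -> : bform G (v *m M) (z *m M) = bform G v z.
    rewrite /bform trmx_mul.
    have -> : v *m M *m G *m (M^T *m z^T) = v *m (M *m G *m M^T) *m z^T.
      by rewrite !mulmxA.
    by rewrite Miso.
  exact: (proj1 (hE v) vE z zZ).
have [i0 hi0] : exists i, ~~ (b i <= Zs)%MS.
  case: (pickP (fun i => ~~ (b i <= Zs)%MS)) => [i hi|H]; first by exists i.
  exfalso.
  have BZ : (B <= Zs)%MS.
    by apply/row_subP => k; rewrite rowK; have := H k; rewrite /= => /negbFE.
  have : (x0 <= Zs)%MS.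
    by apply: submx_trans BZ; apply: submx_full; rewrite row_full_unit.
  by move/hZ => h; rewrite h eqxx in bxy0.
set x := b i0.
have xE : (x <= Es)%MS by case: (hb i0) => // h; rewrite h in hi0.
have xn0 : x != 0 := bi0 i0.
pose L := fun z : 'rV[R]_n => J (z *m M) x *m M.
have Llin : forall a z1 z2, L (a *: z1 + z2) = a *: L z1 + L z2.
  by move=> a z1 z2; rewrite /L mulmxDl -scalemxAl Jlin mulmxDl -scalemxAl.
have J0l : forall x, J 0 x = 0.
  by move=> y; apply: (bform_nondeg uG) => w; rewrite hJ bform0l.
have L0 : L 0 = 0 by rewrite /L mul0mx J0l mul0mx.
pose Lmx := \matrix_j L (delta_mx 0 j).
have LmxE : forall z, z *m Lmx = L z.
  move=> z; rewrite mulmx_sum_row {2}(row_sum_delta z).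
  elim/big_rec2: _ => [|j y1 y2 _ ->]; first by rewrite L0.
  by rewrite Llin rowK.
have Lv0 : forall v, (v <= Zs)%MS -> L v = 0 -> v = 0.
  move=> v vZ Lv; apply/eqP; apply/negP => /negP vn0; have := hpos v vZ vn0.
  have h := hpH v vZ x xE; rewrite -/(L v) Lv J0 mul0mx (Mid v vZ) in h.
  move/esym/eqP: h; rewrite scaler_eq0 (negbTE xn0) orbF oppr_eq0 => /eqP ->.
  by rewrite ltxx.
set U := Zs *m Lmx.
have K0 : (Zs :&: kermx Lmx)%MS = 0.
  apply/eqP; rewrite -submx0; apply/row_subP => k; rewrite submx0; apply/eqP.
  have rZ : (row k (Zs :&: kermx Lmx)%MS <= Zs)%MS.
    exact: submx_trans (row_sub k _) (capmxSl _ _).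
  have rK : (row k (Zs :&: kermx Lmx)%MS <= kermx Lmx)%MS.
    exact: submx_trans (row_sub k _) (capmxSr _ _).
  apply: Lv0 rZ _; rewrite -LmxE; exact/sub_kermxP.
have rU : \rank U = \rank Zs.
  by have := mxrank_mul_ker Zs Lmx; rewrite K0 mxrank0 addn0.
have xnU : ~~ (x <= U)%MS.
  apply/negP => /submxP [w hw]; rewrite /U mulmxA LmxE in hw.
  set v := w *m Zs in hw.
  have vZ : (v <= Zs)%MS by exact: submxMl.
  have h := hpH v vZ x xE; rewrite -/(L v) -hw -/(L v) -hw (Mid v vZ) in h.
  have c0 : 0 <= bform G v v.
    case: (eqVneq v 0) => [->|vn0]; first by rewrite bform0l.
    exact: ltW (hpos v vZ vn0).
  move/eqP: h; rewrite -subr_eq0 -{1}[x]scale1r -scalerBl scaler_eq0 (negbTE xn0) orbF.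
  rewrite opprK; apply/negP; rewrite gt_eqF //; exact: ltr_wpDr c0 ltr01.
have UE : (U <= Es)%MS.
  apply/row_subP => k; rewrite row_mul LmxE; apply: ME; apply: JE.
have lt : (U < U + x)%MS.
  rewrite ltmxE addsmxSl /=; apply: contra xnU => h.
  exact: submx_trans (addsmxSr U x) h.
have h1 := rank_ltmx lt.
have h2 : (\rank (U + x)%MS <= \rank Es)%N by apply: mxrankS; rewrite addsmx_sub UE xE.
by rewrite -rU addn1; exact: leq_trans h1 h2.
Qed.
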